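(* Let $d=2$. Assume $\beta\ne0$, $|\sigma^{(1)}|\ne|\sigma^{(2)}|$, and for $\alpha=1,2$: $\eta^{(\alpha)}\ne0$, $\mathbf v^{(\alpha)}_\pm\not\equiv0$. Then for every $f\in[\widetilde f_{e,l},\widetilde f_{e,u}]$ we have $\widetilde{\mathcal E}^{(1)}_f\cap\widetilde{\mathcal E}^{(2)}_f\subseteq\mathcal F_{f,e}$.
   Context: Let $\Omega\subset\mathbb{R}^2$ be a bounded Lipschitz domain and let $\chi^{(1)}$ be the indicator function of a measurable subset of $\Omega$ (''phase 1''), $\chi^{(2)}=1-\chi^{(1)}$ (''phase 2''). Let $\sigma^{(\alpha)}=\sigma^{(\alpha)}_1+\mathrm{i}\sigma^{(\alpha)}_2$ ($\alpha=1,2$) be complex constants with $\sigma^{(\alpha)}_1>0$ and $\sigma^{(1)}\neq\sigma^{(2)}$, and $\sigma=\sigma^{(1)}\chi^{(1)}+\sigma^{(2)}\chi^{(2)}$. Let $V\in H^1(\Omega;\mathbb C)$ be a weak solution of $\nabla\cdot(\sigma\nabla V)=0$ in $\Omega$. Set $\mathbf E=-\nabla V=\mathbf E_1+\mathrm{i}\mathbf E_2$, $\mathbf J=\sigma\mathbf E=\mathbf J_1+\mathrm{i}\mathbf J_2$ (real parts/imaginary parts). $\langle u\rangle=|\Omega|^{-1}\int_\Omega u$; $f^{(1)}=\langle\chi^{(1)}\rangle\in(0,1)$. For $\alpha,m=1,2$: $\mathbf E^{(\alpha)}_m=\chi^{(\alpha)}\mathbf E_m$, $\mathbf e^{(\alpha)}_m=\langle\mathbf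 E^{(\alpha)}_m\rangle$, $\eta^{(\alpha)}=\langle\|\mathbf E^{(\alpha)}_1\|^2\rangle+\langle\|\mathbf E^{(\alpha)}_2\|^2\rangle$. $\beta=\sigma^{(1)}_1\sigma^{(2)}_2-\sigma^{(1)}_2\sigma^{(2)}_1$. With $\beta\ne0$ define $\gamma=(\sigma^{(1)}_1\sigma^{(2)}_1+\sigma^{(1)}_2\sigma^{(2)}_2)/\beta$, $\psi^{(1)}=|\sigma^{(2)}|^2/\beta$, $\psi^{(2)}=|\sigma^{(1)}|^2/\beta$, $\xi^{(1)}=(\sigma^{(2)}_2\langle\mathbf E_1\cdot\mathbf J_2\rangle+\sigma^{(2)}_1\langle\mathbf E_1\cdot\mathbf J_1\rangle)/\beta$, $\xi^{(2)}=(\sigma^{(1)}_2\langle\mathbf E_1\cdot\mathbf J_2\rangle+\sigma^{(1)}_1\langle\mathbf E_1\cdot\mathbf J_1\rangle)/\beta$. For $f\in(0,1)$ and $(x,y)\in\mathbb R^2$ define $$S^{(1)}_f(x,y)=\begin{bmatrix}x-\frac{\|\mathbf e^{(1)}_1\|^2}{f} & s_1\\ s_1 & -x+\eta^{(1)}-\frac{\|\mathbf e^{(1)}_2\|^2}{f}\end{bmatrix},\quad s_1=-\gamma x-\psi^{(1)}y+\xi^{(1)}-\frac{\mathbf e^{(1)}_1\cdot\mathbf e^{(1)}_2}{f},$$ $$S^{(2)}_f(x,y)=\begin{bmatrix}y-\frac{\|\mathbf e^{(2)}_1\|^2}{1-f} & s_2\\ s_2 & -y+\eta^{(2)}-\frac{\|\mathbf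 e^{(2)}_2\|^2}{1-f}\end{bmatrix},\quad s_2=\psi^{(2)} x+\gamma y-\xi^{(2)}-\frac{\mathbf e^{(2)}_1\cdot\mathbf e^{(2)}_2}{1-f},$$ and $p^{(\alpha)}_f=\det S^{(\alpha)}_f$. Let $R_\perp=\begin{bmatrix}0&1\\-1&0\end{bmatrix}$, $B^{(\alpha)}_{12}=\langle\mathbf E^{(\alpha)}_1\cdot R_\perp\mathbf E^{(\alpha)}_2\rangle$, $f_*=f$ if $\alpha=1$ and $f_*=1-f$ if $\alpha=2$, $\tau^{(\alpha)}_f=\big(B^{(\alpha)}_{12}-\frac{1}{f_*}\mathbf e^{(\alpha)}_1\cdot R_\perp\mathbf e^{(\alpha)}_2\big)^2$. Let $\mathbf v^{(\alpha)}_\pm=\mathbf E^{(\alpha)}_1\pm R_\perp\mathbf E^{(\alpha)}_2$, $\widetilde f_{e,l}=\max_\pm \|\langle\mathbf v^{(1)}_\pm\rangle\|^2/\langle\|\mathbf v^{(1)}_\pm\|^2\rangle$, $\widetilde f_{e,u}=\min_\pm\big(1-\|\langle\mathbf v^{(2)}_\pm\rangle\|^2/\langle\|\mathbf v^{(2)}_\pm\|^2\rangle\big)$. Define $\widetilde{\mathcal E}^{(\alpha)}_f=\{(x,y)\in\mathbb R^2:p^{(\alpha)}_f(x,y)\ge\tau^{(\alpha)}_f\}$ and the rectangle $\mathcal F_{f,e}=\{(x,y): \|\mathbf e^{(1)}_1\|^2/f\le x\le \eta^{(1)}-\|\mathbf e^{(1)}_2\|^2/f,\ \|\mathbf e^{(2)}_1\|^2/(1-f)\le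 y\le \eta^{(2)}-\|\mathbf e^{(2)}_2\|^2/(1-f)\}$. *)

(* Defs.v *)
From Stdlib Require Import Reals.
Open Scope R_scope.

Definition vec := (R * R)%type.
Definition vadd (u v : vec) : vec := (fst u + fst v, snd u + snd v).
Definition vsub (u v : vec) : vec := (fst u - fst v, snd u - snd v).
Definition vscale (c : R) (v : vec) : vec := (c * fst v, c * snd v).
Definition dot (u v : vec) : R := fst u * fst v + snd u * snd v.
Definition nsq (v : vec) : R := dot v v.
Definition Rperp (v : vec) : vec := (snd v, - fst v).

(* Abstract model of the normalized average <u> = |Omega|^-1 \int_Omega u :
   a normalized, linear, positive functional. *)
Definition is_average (X : Type) (avg : (X -> R) -> R) : Prop :=
  (forall g h : X -> R, avg (fun x => g x + h x) = avg g + avg h) /\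
  (forall (c : R) (g : X -> R), avg (fun x => c * g x) = c * avg g) /\
  avg (fun _ => 1) = 1 /\
  (forall g : X -> R, (forall x, 0 <= g x) -> 0 <= avg g).

Record Data := mkData {
  X : Type;                     (* points of Omega *)
  avg : (X -> R) -> R;
  chi1 : X -> bool;
  s1r : R; s1i : R;             (* sigma^(1) = s1r + i s1i *)
  s2r : R; s2i : R;             (* sigma^(2) = s2r + i s2i *)
  E1 : X -> vec;                (* Re E *)
  E2 : X -> vec                 (* Im E *)
}.

Inductive phase := P1 | P2.

Section Defs.
Variable D : Data.

Definition vavg (F : X D -> vec) : vec :=
  (avg D (fun x => fst (F x)), avg D (fun x => snd (F x))).

Definition chi (p : phase) (x : X D) : R :=
  match p with
  | P1 => if chi1 D x then 1 else 0
  | P2 => if chi1 D x then 0 else 1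
  end.

Definition sig_r (x : X D) : R := s1r D * chi P1 x + s2r D * chi P2 x.
Definition sig_i (x : X D) : R := s1i D * chi P1 x + s2i D * chi P2 x.

(* J = sigma E = J1 + i J2 *)
Definition J1 (x : X D) : vec := vsub (vscale (sig_r x) (E1 D x)) (vscale (sig_i x) (E2 D x)).
Definition J2 (x : X D) : vec := vadd (vscale (sig_i x) (E1 D x)) (vscale (sig_r x) (E2 D x)).

Definition Ea1 (p : phase) (x : X D) : vec := vscale (chi p x) (E1 D x).
Definition Ea2 (p : phase) (x : X D) : vec := vscale (chi p x) (E2 D x).

Definition e1 (p : phase) : vec := vavg (Ea1 p).
Definition e2 (p : phase) : vec := vavg (Ea2 p).

Definition eta (p : phase) : R :=
  avg D (fun x => nsq (Ea1 p x)) + avg D (fun x => nsq (Ea2 p x)).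

Definition beta : R := s1r D * s2i D - s1i D * s2r D.
Definition gamma : R := (s1r D * s2r D + s1i D * s2i D) / beta.
Definition psi1 : R := (s2r D ^ 2 + s2i D ^ 2) / beta.
Definition psi2 : R := (s1r D ^ 2 + s1i D ^ 2) / beta.
Definition avgE1J1 : R := avg D (fun x => dot (E1 D x) (J1 x)).
Definition avgE1J2 : R := avg D (fun x => dot (E1 D x) (J2 x)).
Definition xi1 : R := (s2i D * avgE1J2 + s2r D * avgE1J1) / beta.
Definition xi2 : R := (s1i D * avgE1J2 + s1r D * avgE1J1) / beta.

Definition sS1 (f x y : R) : R :=
  - gamma * x - psi1 * y + xi1 - dot (e1 P1) (e2 P1) / f.
Definition sS2 (f x y : R) : R :=
  psi2 * x + gamma * y - xi2 - dot (e1 P2) (e2 P2) / (1 - f).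

(* p^(alpha)_f = det S^(alpha)_f *)
Definition pS1 (f x y : R) : R :=
  (x - nsq (e1 P1) / f) * (- x + eta P1 - nsq (e2 P1) / f) - sS1 f x y * sS1 f x y.
Definition pS2 (f x y : R) : R :=
  (y - nsq (e1 P2) / (1 - f)) * (- y + eta P2 - nsq (e2 P2) / (1 - f))
  - sS2 f x y * sS2 f x y.

Definition fstar (p : phase) (f : R) : R :=
  match p with P1 => f | P2 => 1 - f end.

Definition B12 (p : phase) : R := avg D (fun x => dot (Ea1 p x) (Rperp (Ea2 p x))).

Definition tau (p : phase) (f : R) : R :=
  (B12 p - dot (e1 p) (Rperp (e2 p)) / fstar p f) ^ 2.

Definition vplus (p : phase) (x : X D) : vec := vadd (Ea1 p x) (Rperp (Ea2 p x)).
Definition vminus (p : phase) (x : X D) : vec := vsub (Ea1 p x) (Rperp (Ea2 p x)).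

Definition ratio (v : X D -> vec) : R := nsq (vavg v) / avg D (fun x => nsq (v x)).

Definition fel : R := Rmax (ratio (vplus P1)) (ratio (vminus P1)).
Definition feu : R := Rmin (1 - ratio (vplus P2)) (1 - ratio (vminus P2)).

Definition Etil1 (f x y : R) : Prop := pS1 f x y >= tau P1 f.
Definition Etil2 (f x y : R) : Prop := pS2 f x y >= tau P2 f.

Definition Frect (f x y : R) : Prop :=
  nsq (e1 P1) / f <= x <= eta P1 - nsq (e2 P1) / f /\
  nsq (e1 P2) / (1 - f) <= y <= eta P2 - nsq (e2 P2) / (1 - f).

(* v not identically zero (as an L^2 field): <|v|^2> <> 0 *)
Definition nonzero_field (v : X D -> vec) : Prop := avg D (fun x => nsq (v x)) <> 0.

(* Standing assumptions of the context (the PDE itself cannot be stated). *)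
Definition standing : Prop :=
  is_average (X D) (avg D) /\
  0 < avg D (chi P1) < 1 /\
  0 < s1r D /\ 0 < s2r D /\
  (s1r D, s1i D) <> (s2r D, s2i D).

End Defs.

(* Main.v *)
Require Import Defs.
From Stdlib Require Import Reals Lra Psatz FunctionalExtensionality.
Open Scope R_scope.

Section H.
Variable T : Type.
Variable A : (T -> R) -> R.
Hypothesis HA : is_average T A.

Lemma avg_ext (g h : T -> R) : (forall x, g x = h x) -> A g = A h.
Proof. intro E. f_equal. apply functional_extensionality. exact E. Qed.

Lemma avg_add (g h : T -> R) : A (fun x => g x + h x) = A g + A h.
Proof. destruct HA as [H1 _]. apply H1. Qed.

Lemma avg_sub (g h : T -> R) : A (fun x => g x - h x) = A g - A h.
Proof.
  destruct HA as [H1 [H2 _]].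
  rewrite (avg_ext _ (fun x => g x + (fun y => -1 * h y) x)) by (intros; simpl; ring).
  rewrite H1, H2. ring.
Qed.

Lemma avg_nonneg (g : T -> R) : (forall x, 0 <= g x) -> 0 <= A g.
Proof. destruct HA as [_ [_ [_ H4]]]. apply H4. Qed.
End H.

Lemma nsq_ge0 v : 0 <= nsq v.
Proof. unfold nsq, dot. nra. Qed.

Lemma bound (D : Data) (p : phase) (g : R) :
  is_average (X D) (avg D) ->
  nonzero_field D (vplus D p) -> nonzero_field D (vminus D p) ->
  ratio D (vplus D p) <= g -> ratio D (vminus D p) <= g ->
  nsq (e1 D p) + nsq (e2 D p) <= g * eta D p.
Proof.
  intros HA Np Nm Rp Rm.
  unfold nonzero_field, ratio in *.
  set (dp := avg D (fun x => nsq (vplus D p x))) in *.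
  set (dm := avg D (fun x => nsq (vminus D p x))) in *.
  assert (dp0 : 0 < dp).
  { assert (0 <= dp) by (apply avg_nonneg; [exact HA| intro; apply nsq_ge0]). lra. }
  assert (dm0 : 0 < dm).
  { assert (0 <= dm) by (apply avg_nonneg; [exact HA| intro; apply nsq_ge0]). lra. }
  assert (Ip : nsq (vavg D (vplus D p)) <= g * dp).
  { apply (Rmult_le_compat_r dp) in Rp; [|lra].
    unfold Rdiv in Rp. rewrite Rmult_assoc, Rinv_l in Rp by lra. lra. }
  assert (Im : nsq (vavg D (vminus D p)) <= g * dm).
  { apply (Rmult_le_compat_r dm) in Rm; [|lra].
    unfold Rdiv in Rm. rewrite Rmult_assoc, Rinv_l in Rm by lra. lra. }
  assert (Ed : dp + dm = 2 * eta D p).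
  { unfold dp, dm, eta. rewrite <- !(avg_add _ _ HA).
    destruct HA as [_ [H2 _]]. rewrite <- H2. apply avg_ext.
    intro x. unfold vplus, vminus, nsq, dot, vadd, vsub, Rperp. simpl. ring. }
  assert (En : nsq (vavg D (vplus D p)) + nsq (vavg D (vminus D p))
               = 2 * (nsq (e1 D p) + nsq (e2 D p))).
  { unfold vavg, e1, e2, nsq, dot, vavg. cbn [fst snd]. idtac.
    rewrite (avg_ext _ (avg D) (fun x => fst (vplus D p x))
               (fun x => fst (Ea1 D p x) + snd (Ea2 D p x))) by reflexivity.
    rewrite (avg_ext _ (avg D) (fun x => snd (vplus D p x))
               (fun x => snd (Ea1 D p x) - fst (Ea2 D p x))) by
      (intros; unfold vplus, vadd, Rperp; simpl; ring).
    rewrite (avg_ext _ (avg D) (fun x => fst (vminus D p x))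
               (fun x => fst (Ea1 D p x) - snd (Ea2 D p x))) by reflexivity.
    rewrite (avg_ext _ (avg D) (fun x => snd (vminus D p x))
               (fun x => snd (Ea1 D p x) + fst (Ea2 D p x))) by
      (intros; unfold vminus, vsub, Rperp; simpl; ring).
    rewrite !(avg_add _ _ HA), !(avg_sub _ _ HA). ring. }
  assert (g * dp + g * dm = 2 * (g * eta D p)) by (rewrite <- Rmult_plus_distr_l, Ed; ring). lra.
Qed.

Lemma between (a b x s t : R) : a <= b -> 0 <= t -> (x - a) * (b - x) - s * s >= t -> a <= x <= b.
Proof.
  intros Hab Ht H.
  assert (0 <= (x - a) * (b - x)) by nra.
  destruct (Rle_dec a x); destruct (Rle_dec x b); try lra; nra.
Qed.

Theorem mainTheorem9 (D : Data) :
  standing D ->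
  beta D <> 0 ->
  sqrt (s1r D ^ 2 + s1i D ^ 2) <> sqrt (s2r D ^ 2 + s2i D ^ 2) ->
  eta D P1 <> 0 -> eta D P2 <> 0 ->
  nonzero_field D (vplus D P1) -> nonzero_field D (vminus D P1) ->
  nonzero_field D (vplus D P2) -> nonzero_field D (vminus D P2) ->
  forall f : R, 0 < f < 1 -> fel D <= f <= feu D ->
  forall x y : R, Etil1 D f x y -> Etil2 D f x y -> Frect D f x y.
Proof.
  intros [HA _] _ _ _ _ Np1 Nm1 Np2 Nm2 f Hf [Hl Hu] x y E1 E2.
  unfold fel, feu in *.
  pose proof (Rmax_l (ratio D (vplus D P1)) (ratio D (vminus D P1))).
  pose proof (Rmax_r (ratio D (vplus D P1)) (ratio D (vminus D P1))).
  pose proof (Rmin_l (1 - ratio D (vplus D P2)) (1 - ratio D (vminus D P2))).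
  pose proof (Rmin_r (1 - ratio D (vplus D P2)) (1 - ratio D (vminus D P2))).
  pose proof (bound D P1 f HA Np1 Nm1 ltac:(lra) ltac:(lra)) as B1.
  pose proof (bound D P2 (1 - f) HA Np2 Nm2 ltac:(lra) ltac:(lra)) as B2.
  unfold Etil1, Etil2, pS1, pS2, tau, Frect in *. simpl in *.
  split.
  - eapply between; [| | replace ((x - nsq (e1 D P1) / f) * (eta D P1 - nsq (e2 D P1) / f - x))
        with ((x - nsq (e1 D P1) / f) * (- x + eta D P1 - nsq (e2 D P1) / f)) by ring; exact E1].
    + apply (Rmult_le_reg_l f); [lra|]. field_simplify; lra.
    + apply pow2_ge_0.
  - eapply between; [| | replace ((y - nsq (e1 D P2) / (1 - f)) * (eta D P2 - nsq (e2 D P2) / (1 - f) - y))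
        with ((y - nsq (e1 D P2) / (1 - f)) * (- y + eta D P2 - nsq (e2 D P2) / (1 - f))) by ring; exact E2].
    + apply (Rmult_le_reg_l (1 - f)); [lra|]. field_simplify; lra.
    + apply pow2_ge_0.
Qed.
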